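(* Let $d\ge2$ and let $K\subset\mathbb R^d$ be a convex polytope with $2d$ corners, namely the convex hull of the endpoints of its $d$ diameters, with diameters $0<l_d\le\dots\le l_1<\infty$ (i.e. $D_K^{(i)}=l_i$). Then there exists a box $B\subset K$ which is congruent to $\prod_{i=1}^d[0,2^{-2(d-1)}l_i]$.
   Context: Diameters of a convex body: for a convex body $K\subset\mathbb R^d$, $D_K^{(1)}:=\operatorname{diam}(K)=\max\{|x-y|:x,y\in K\}$, with orientation $p_K^{(1)}=\frac{x-y}{|x-y|}$ for a maximizing pair $x,y$. Let $H_{p^{(1)}_K}$ be the hyperplane through the origin perpendicular to $p^{(1)}_K$ and $D_K^{(2)}:=\operatorname{diam}(P_{H_{p^{(1)}_K}}(K))$, $P_H$ orthogonal projection onto $H$, with orientation $p^{(2)}_K\in H_{p^{(1)}_K}$; iteratively, $H_{p^{(i)}_K}$ is the hyperplane within $H_{p^{(i-1)}_K}$ perpendicular to $p^{(i)}_K$, and $D_K^{(i+1)}:=\operatorname{diam}(P_{H_{p^{(i)}_K}}(K))$. The $2d$ ''corners'' of the polytope are the endpoints (in $K$) of the segments realizing these $d$ diameters, and $K$ is their convex hull. *)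

(* Defs.v *)
From HB Require Import structures.
From mathcomp Require Import all_boot all_order all_algebra.
From mathcomp Require Import boolp classical_sets reals.
Set Implicit Arguments. Unset Strict Implicit. Unset Printing Implicit Defensive.
Import Order.TTheory GRing.Theory Num.Theory.
Local Open Scope ring_scope.
Local Open Scope classical_set_scope.

Definition dotv {R : realType} {d : nat} (u v : 'rV[R]_d) : R :=
  \sum_(i < d) u 0 i * v 0 i.
Definition enorm {R : realType} {d : nat} (v : 'rV[R]_d) : R :=
  Num.sqrt (dotv v v).

(* Orthogonal projection onto the orthogonal complement of
   span(p 0, ..., p (k-1)), written for a family p that is orthonormal
   (which the diameter construction below guarantees). *)
Definition projperp {R : realType} {d : nat} (p : 'I_d -> 'rV[R]_d) (k : nat)
    (v : 'rV[R]_d) : 'rV[R]_d :=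
  v - \sum_(j < d | (j < k)%N) dotv v (p j) *: p j.

Definition hull2 {R : realType} {d : nat} (x y : 'I_d -> 'rV[R]_d)
    : set 'rV[R]_d :=
  [set z | exists a b : 'I_d -> R,
     (forall i, 0 <= a i) /\ (forall i, 0 <= b i) /\
     \sum_(i < d) a i + \sum_(i < d) b i = 1 /\
     z = \sum_(i < d) a i *: x i + \sum_(i < d) b i *: y i].

(* Iterated diameters: (x i, y i) are points of K whose projections onto
   H_{p^(i)} (complement of span(p 0, ..., p (i-1))) realise the diameter
   of that projection of K; l i is that diameter D_K^(i+1) and p i the
   orientation (unit vector along the projected segment). *)
Definition diameter_data {R : realType} {d : nat} (K : set 'rV[R]_d)
    (x y p : 'I_d -> 'rV[R]_d) (l : 'I_d -> R) : Prop :=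
  forall i : 'I_d,
    K (x i) /\ K (y i) /\
    (forall a b, K a -> K b ->
       enorm (projperp p i (a - b)) <= enorm (projperp p i (x i - y i))) /\
    l i = enorm (projperp p i (x i - y i)) /\
    p i = (l i)^-1 *: projperp p i (x i - y i).

Definition isometry {R : realType} {d : nat} (f : 'rV[R]_d -> 'rV[R]_d) :=
  forall u v, enorm (f u - f v) = enorm (u - v).
Definition congruent {R : realType} {d : nat} (A B : set 'rV[R]_d) :=
  exists f, isometry f /\ f @` A = B.

Definition box {R : realType} {d : nat} (s : 'I_d -> R) : set 'rV[R]_d :=
  [set z | forall i, 0 <= z 0 i <= s i].

(* Main.v *)
Require Import Defs.
From HB Require Import structures.
From mathcomp Require Import all_boot all_order all_algebra.
From mathcomp Require Import boolp classical_sets reals.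
From mathcomp Require Import ring lra.
Set Implicit Arguments. Unset Strict Implicit.
Import Order.TTheory GRing.Theory Num.Theory.
Local Open Scope ring_scope.
From mathcomp Require Import ring lra.
Local Open Scope classical_set_scope.

Lemma dotvC (R : realType) (d : nat) (u v : 'rV[R]_d) : dotv u v = dotv v u.
Proof. by rewrite /dotv; apply: eq_bigr => i _; rewrite mulrC. Qed.

Lemma dotvDl (R : realType) (d : nat) (u w v : 'rV[R]_d) :
  dotv (u + w) v = dotv u v + dotv w v.
Proof. by rewrite /dotv -big_split; apply: eq_bigr => i _; rewrite mxE mulrDl. Qed.

Lemma dotvZl (R : realType) (d : nat) (a : R) (u v : 'rV[R]_d) :
  dotv (a *: u) v = a * dotv u v.
Proof. by rewrite /dotv mulr_sumr; apply: eq_bigr => i _; rewrite mxE mulrA. Qed.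

Lemma dotvNl (R : realType) (d : nat) (u v : 'rV[R]_d) :
  dotv (- u) v = - dotv u v.
Proof. by rewrite -scaleN1r dotvZl mulN1r. Qed.

Lemma dotvBl (R : realType) (d : nat) (u w v : 'rV[R]_d) :
  dotv (u - w) v = dotv u v - dotv w v.
Proof. by rewrite dotvDl dotvNl. Qed.

Lemma dotv0l (R : realType) (d : nat) (v : 'rV[R]_d) : dotv 0 v = 0.
Proof. by rewrite /dotv big1 // => i _; rewrite mxE mul0r. Qed.

Lemma dotv_suml (R : realType) (d : nat) (I : Type) (r : seq I) (P : pred I)
  (F : I -> 'rV[R]_d) v :
  dotv (\sum_(j <- r | P j) F j) v = \sum_(j <- r | P j) dotv (F j) v.
Proof.
apply: (big_morph (fun u => dotv u v)) => [a b|]; first exact: dotvDl.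
exact: dotv0l.
Qed.

Lemma dotv_ge0 (R : realType) (d : nat) (v : 'rV[R]_d) : 0 <= dotv v v.
Proof. by rewrite /dotv; apply: sumr_ge0 => i _; rewrite -expr2 sqr_ge0. Qed.

Lemma enorm_sq (R : realType) (d : nat) (v : 'rV[R]_d) : enorm v ^+ 2 = dotv v v.
Proof. by rewrite /enorm sqr_sqrtr // dotv_ge0. Qed.

Lemma dotv_le (R : realType) (d : nat) (v q : 'rV[R]_d) :
  dotv q q = 1 -> `|dotv v q| <= enorm v.
Proof.
move=> q1; rewrite /enorm -sqrtr_sqr; apply: ler_wsqrtr.
have := dotv_ge0 (v - dotv v q *: q).
rewrite !dotvBl !dotvZl (dotvC q (v - _)) dotvBl dotvZl q1.
rewrite (dotvC v (v - _)) dotvBl dotvZl (dotvC q v).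
set a := dotv v q; set b := dotv v v; rewrite expr2 => h; nra.
Qed.

Lemma proj_orth (R : realType) (d : nat) (p : 'I_d -> 'rV[R]_d) (i : nat) v
  (j : 'I_d) :
  (forall k j : 'I_d, (k < i)%N -> (j < i)%N -> dotv (p k) (p j) = (k == j)%:R) ->
  (j < i)%N -> dotv (projperp p i v) (p j) = 0.
Proof.
move=> orth ji; rewrite /projperp dotvBl dotv_suml (bigD1 j) //= big1.
  by rewrite dotvZl orth // eqxx mulr1 addr0 subrr.
move=> k /andP[ki kj]; rewrite dotvZl orth // (negbTE kj) mulr0 //.
Qed.

Lemma p_unit (R : realType) (d : nat) K (x y p : 'I_d -> 'rV[R]_d) l i :
  diameter_data K x y p l -> (forall i, 0 < l i) -> dotv (p i) (p i) = 1.
Proof.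
move=> /(_ i) [_ [_ [_ [li pi]]]] lpos.
rewrite pi dotvZl dotvC dotvZl -enorm_sq -li.
have := lpos i; rewrite lt0r => /andP[h _].
by rewrite expr2 mulKf // mulVf.
Qed.

Lemma p_orthonormal (R : realType) (d : nat) K (x y p : 'I_d -> 'rV[R]_d) l :
  diameter_data K x y p l -> (forall i, 0 < l i) ->
  forall i j, dotv (p i) (p j) = (i == j)%:R.
Proof.
move=> D lpos.
suff H : forall n (k j : 'I_d), (k < n)%N -> (j < n)%N ->
    dotv (p k) (p j) = (k == j)%:R.
  by move=> i j; apply: (H d).
elim=> [//|n IH] k j; rewrite !ltnS (leq_eqVlt k) (leq_eqVlt j).
have key : forall a b : 'I_d, val a = n -> (b < n)%N -> dotv (p a) (p b) = 0.
  move=> a b ha hb; have [_ [_ [_ [_ pa]]]] := D a.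
  rewrite pa dotvZl proj_orth ?mulr0 //; last by rewrite ha.
  by move=> k' j'; rewrite ha; apply: IH.
case/orP=> [/eqP kn|kn]; case/orP=> [/eqP jn|jn].
- have -> : k = j by apply: val_inj; rewrite /= kn jn.
  by rewrite eqxx (p_unit _ D).
- rewrite key //; case: eqP => // kj; move: jn; by rewrite -kj kn ltnn.
- rewrite dotvC key //; case: eqP => // kj; move: kn; by rewrite kj jn ltnn.
- exact: IH.
Qed.

Lemma u_decomp (R : realType) (d : nat) K (x y p : 'I_d -> 'rV[R]_d) l (m : 'I_d) :
  diameter_data K x y p l -> (forall i, 0 < l i) ->
  x m - y m = \sum_(j < d | (j < m)%N) dotv (x m - y m) (p j) *: p j
              + l m *: p m.
Proof.
move=> D lpos; have [_ [_ [_ [_ pm]]]] := D m.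
have lm0 : l m != 0 by rewrite gt_eqF.
rewrite pm scalerA mulfV // scale1r /projperp.
by rewrite [RHS]addrC subrK.
Qed.

Lemma u_coef (R : realType) (d : nat) K (x y p : 'I_d -> 'rV[R]_d) l (m j : 'I_d) :
  diameter_data K x y p l -> (forall i, 0 < l i) -> (j < m)%N ->
  `|dotv (x m - y m) (p j)| <= l j.
Proof.
move=> D lpos jm.
have orth := p_orthonormal D lpos.
have e : dotv (projperp p j (x m - y m)) (p j) = dotv (x m - y m) (p j).
  rewrite /projperp [LHS]dotvBl dotv_suml big1 ?subr0 // => k kj.
  by rewrite dotvZl orth; case: eqP => [kj'|]; [rewrite kj' ltnn in kj|rewrite mulr0].
rewrite -e; apply: le_trans (dotv_le _ (p_unit _ D lpos)) _.
have [Kxm [Kym _]] := D m.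
have [_ [_ [mx [lj _]]]] := D j.
by rewrite lj; apply: mx.
Qed.

Lemma solve_tri (R : realType) (d : nat) K (x y p : 'I_d -> 'rV[R]_d) l :
  diameter_data K x y p l -> (forall i, 0 < l i) ->
  forall m, (m <= d)%N -> forall (g : R) (c : 'I_d -> R), 0 <= g ->
  (forall j : 'I_d, (j < m)%N -> `|c j| <= g * l j) ->
  exists t : 'I_d -> R, (forall i, 2 * `|t i| <= g * 2 ^+ m) /\
    \sum_(j < d | (j < m)%N) c j *: p j
    = \sum_(i < d | (i < m)%N) t i *: (x i - y i).
Proof.
move=> D lpos; elim=> [_ g c g0 _|m IH md g c g0 hc].
  exists (fun _ => 0); split; first by move=> i; rewrite normr0 mulr0 expr0 mulr1.
  by rewrite !big_pred0.
pose M : 'I_d := Ordinal md.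
pose tau := c M / l M.
have lM := lpos M.
have htau : `|tau| <= g.
  rewrite /tau normrM normfV (gtr0_norm lM) ler_pdivrMr //; exact: hc.
pose c' := fun j => c j - tau * dotv (x M - y M) (p j).
have [t' [bt' et']] : exists t : 'I_d -> R, (forall i, 2 * `|t i| <= (2 * g) * 2 ^+ m) /\
    \sum_(j < d | (j < m)%N) c' j *: p j
    = \sum_(i < d | (i < m)%N) t i *: (x i - y i).
  apply: IH; first exact: ltnW.
    lra.
  move=> j jm; rewrite /c'.
  have h1 := hc j (ltnW jm).
  have h2 := u_coef D lpos (jm : (j < M)%N).
  apply: le_trans (ler_normB _ _) _.
  rewrite normrM.
  have := normr_ge0 tau; have := normr_ge0 (dotv (x M - y M) (p j)).
  have := lpos j; nra.
exists (fun i => if i == M then tau else t' i); split.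
  move=> i; case: eqP => _.
    have e1 : (1 : R) <= 2 ^+ m by apply: exprn_ege1; lra.
    rewrite exprS; have := normr_ge0 tau; nra.
  by rewrite exprS mulrCA mulrA; apply: bt'.
have split_pred : forall F : 'I_d -> 'rV[R]_d,
    \sum_(j < d | (j < m.+1)%N) F j = \sum_(j < d | (j < m)%N) F j + F M.
  move=> F; rewrite (bigD1 M) //= addrC; congr (_ + _).
  apply: eq_bigl => j; rewrite ltnS leq_eqVlt.
  have -> : (j == M) = (val j == m) by [].
  by case: ltngtP.
rewrite !split_pred eqxx.
rewrite [in RHS](eq_bigr (fun i => t' i *: (x i - y i))); last first.
  by move=> i im; case: (i =P M) => // iM; rewrite iM ltnn in im.
rewrite -et' (u_decomp M D lpos) scalerDr scalerA /tau.
rewrite divfK ?gt_eqF // addrA; congr (_ + _).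
have -> : nat_of_ord M = m by [].
rewrite scaler_sumr -big_split /=; apply: eq_bigr => j _.
by rewrite scalerA -scalerDl /c' subrK.
Qed.

Lemma nat_bound n : (n.+1 * 2 ^ n.+1 <= 2 * 2 ^ (2 * n))%N.
Proof.
have h : forall k, (k.+1 <= 2 ^ k)%N.
  elim=> // k IH; rewrite expnS mul2n -addnn -addn1 -(addn1 k).
  apply: leq_add; first by rewrite addn1.
  exact: leq_ltn_trans (leq0n k) IH.
apply: (@leq_trans (2 ^ n * 2 ^ n.+1)); first exact: leq_mul (h n) (leqnn _).
by rewrite -expnD -expnS mul2n -addnn addnS.
Qed.

Lemma dot_comb (R : realType) (d : nat) (p : 'I_d -> 'rV[R]_d) (a b : 'I_d -> R) :
  (forall i j, dotv (p i) (p j) = (i == j)%:R) ->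
  dotv (\sum_j a j *: p j) (\sum_k b k *: p k) = \sum_j a j * b j.
Proof.
move=> orth; rewrite dotv_suml; apply: eq_bigr => j _.
rewrite dotvZl dotvC dotv_suml (bigD1 j) //= big1 ?addr0.
  by rewrite dotvZl orth eqxx mulr1.
by move=> k kj; rewrite dotvZl orth (negbTE kj) mulr0.
Qed.

Unset Implicit Arguments.
Theorem lemma1 (R : realType) (d : nat) (K : set 'rV[R]_d)
    (x y p : 'I_d -> 'rV[R]_d) (l : 'I_d -> R) :
  (2 <= d)%N ->
  diameter_data K x y p l ->
  (forall i, 0 < l i) ->
  K = hull2 x y ->
  exists B : set 'rV[R]_d,
    B `<=` K /\
    congruent (box (fun i => (2 ^+ (2 * (d - 1)))^-1 * l i)) B.
Proof.
move=> d2 D lpos ->.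
have d0 : (0 < d)%N by apply: leq_trans d2.
have dR : (0 : R) < d%:R by rewrite ltr0n.
have dR0 : (d%:R : R) != 0 by rewrite gt_eqF.
have orth := p_orthonormal D lpos.
pose Q : R := 2 ^+ (2 * (d - 1)).
have Q0 : 0 < Q by rewrite exprn_gt0.
pose sg := Q^-1.
pose Mid := \sum_(i < d) (2 * d%:R)^-1 *: (x i + y i).
pose f := fun z : 'rV[R]_d => Mid + \sum_(j < d) (z 0 j - sg * l j / 2) *: p j.
exists (f @` box (fun i => sg * l i)); split; last first.
  exists f; split => // u v.
  rewrite /f opprD addrACA subrr add0r -sumrB.
  rewrite (eq_bigr (fun j => (u 0 j - v 0 j) *: p j)); last first.
    by move=> j _; rewrite -scalerBl; congr (_ *: _); ring.
  rewrite /enorm dot_comb //; congr Num.sqrt; apply: eq_bigr => j _.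
  by rewrite !mxE.
move=> _ [z zb <-]; rewrite /hull2 /=.
pose c := fun j => d%:R * (z 0 j - sg * l j / 2).
pose g := d%:R * sg / 2.
have g0 : 0 <= g by rewrite /g /sg; apply: divr_ge0 => //; apply: mulr_ge0;
  [exact: ltW | rewrite invr_ge0; exact: ltW].
have sg0 : 0 < sg by rewrite /sg invr_gt0.
have hc : forall j : 'I_d, (j < d)%N -> `|c j| <= g * l j.
  move=> j _; have := zb j; move=> /andP[z1 z2].
  rewrite /c /g normrM (gtr0_norm dR) -!mulrA ler_pM2l //.
  have lj := lpos j; rewrite ler_norml; apply/andP; split; nra.
have [t [bt et]] := solve_tri D lpos (leqnn d) g0 hc.
have gb : g * 2 ^+ d <= 1.
  have hb : (d%:R * 2 ^+ d : R) <= 2 * Q.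
    have := nat_bound d.-1; rewrite prednK // -subn1 -(ler_nat R).
    by rewrite !natrM !natrX.
  have -> : g * 2 ^+ d = (d%:R * 2 ^+ d) / (2 * Q).
    by rewrite /g /sg; field; rewrite gt_eqF.
  by rewrite ler_pdivrMr ?mul1r // mulr_gt0.
have tb : forall i, -1 <= 2 * t i <= 1.
  move=> i; have := bt i; have := ler_norm (t i); have := ler_norm (- t i).
  rewrite normrN => h1 h2 h3; apply/andP; split; lra.
exists (fun i => (1 + 2 * t i) / (2 * d%:R)), (fun i => (1 - 2 * t i) / (2 * d%:R)).
split.
  move=> i; have := tb i; case/andP => h1 h2.
  by apply: divr_ge0; [lra | apply: mulr_ge0 => //; exact: ltW].
split.
  move=> i; have := tb i; case/andP => h1 h2.
  by apply: divr_ge0; [lra | apply: mulr_ge0 => //; exact: ltW].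
split.
  rewrite -big_split /= (eq_bigr (fun _ => (d%:R)^-1)); last first.
    by move=> i _; field.
  rewrite sumr_const card_ord.
  have -> : forall a : R, a *+ d = d%:R * a by move=> a; rewrite mulr_natl.
  by rewrite mulfV.
have hpred : forall F : 'I_d -> 'rV[R]_d,
    \sum_(j < d | (j < d)%N) F j = \sum_(j < d) F j.
  by move=> F; apply: eq_bigl => j; rewrite ltn_ord.
rewrite !hpred in et.
have e1 : \sum_(j < d) (z 0 j - sg * l j / 2) *: p j
    = \sum_(i < d) (t i / d%:R) *: (x i - y i).
  transitivity ((d%:R)^-1 *: \sum_(j < d) c j *: p j).
    rewrite scaler_sumr; apply: eq_bigr => j _; rewrite scalerA /c.
    by congr (_ *: _); field.
  rewrite et scaler_sumr; apply: eq_bigr => i _.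
  by rewrite scalerA mulrC.
rewrite /f e1 /Mid -!big_split /=; apply: eq_bigr => i _.
apply/rowP => k; rewrite !mxE; by field.
Qed.
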